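(* Let $(M,g,S)$, $p$, $u$, $\varphi$, $\beta_2$ and $e_1,e_2$ be as in the context. Give each $v\in\beta_2$ coordinates $(x,y)$ by $v=xe_1+ye_2$. For $a\in\mathbb R$, the circle $k_2=\{v\in\beta_2:\tilde g(v,v)=a\}$ has the equation $$\frac{2\cos\varphi+1}{1+\cos\varphi}\,x^2+\frac{2\cos\varphi-1}{1-\cos\varphi}\,y^2=a.$$
   Context: $M$ is a 4-dimensional differentiable manifold with a positive definite metric $g$ and a tensor field $S$ of type $(1,1)$ whose components in some local coordinate system form the matrix with rows $(0,1,0,0)$, $(0,0,1,0)$, $(0,0,0,1)$, $(-1,0,0,0)$; hence $S^4=-\mathrm{id}$, and $g(Su,Sv)=g(u,v)$ for all vector fields $u,v$. The associated metric is $\tilde g(u,v)=g(u,Sv)+g(Su,v)$. Here $p\in M$, $u\in T_pM$ is a $g$-unit vector such that $\{u,Su,S^2u,S^3u\}$ is a basis of $T_pM$, $\varphi=\angle(u,Su)$ with respect to $g$ (so $\cos\varphi=g(u,Su)$; known: $\frac{\pi}{4}<\varphi<\frac{3\pi}{4}$), $\beta_2=\mathrm{span}\{u,Su\}$, and $e_1=\frac{1}{\sqrt{2(1+\cos\varphi)}}(u+Su)$, $e_2=\frac{1}{\sqrt{2(1-\cos\varphi)}}(-u+Su)$ (a $g$-orthonormal basis of $\beta_2$). *)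

(* Defs.v *)
From HB Require Import structures.
From mathcomp Require Import all_boot all_order all_algebra.
From mathcomp Require Import all_classical all_reals all_analysis.
Set Implicit Arguments. Unset Strict Implicit. Unset Printing Implicit Defensive.
Import Order.TTheory GRing.Theory Num.Theory.
Local Open Scope ring_scope.

(* The structure S at p, in the local coordinates: the matrix with rows
   (0,1,0,0), (0,0,1,0), (0,0,0,1), (-1,0,0,0); it acts on column vectors
   of components: (S v)^i = S^i_j v^j. *)
Definition Smat (R : ringType) : 'M[R]_4 :=
  \matrix_(i < 4, j < 4)
    (if (j : nat) == (i : nat).+1 then 1
     else if ((i : nat) == 3%N) && ((j : nat) == 0%N) then -1 else 0).

Definition gform (R : ringType) (G : 'M[R]_4) (v w : 'cV[R]_4) : R :=
  (v^T *m G *m w) 0 0.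

Definition gtilde (R : ringType) (G : 'M[R]_4) (v w : 'cV[R]_4) : R :=
  gform G v (Smat R *m w) + gform G (Smat R *m v) w.

Definition is_basis4 (R : ringType) (v0 v1 v2 v3 : 'cV[R]_4) : Prop :=
  forall a b c d : R, a *: v0 + b *: v1 + c *: v2 + d *: v3 = 0 ->
    [/\ a = 0, b = 0, c = 0 & d = 0].

(* Main.v *)
Require Import Defs.
From HB Require Import structures.
From mathcomp Require Import all_boot all_order all_algebra.
From mathcomp Require Import all_classical all_reals all_analysis.
From mathcomp Require Import ring lra.
Import Order.TTheory GRing.Theory Num.Theory.
Local Open Scope ring_scope.

Section Aux.
Variable R : realType.
Variable G : 'M[R]_4.

Lemma gformDl (a b w : 'cV[R]_4) : gform G (a + b) w = gform G a w + gform G b w.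
Proof. by rewrite /gform linearD /= !mulmxDl mxE. Qed.
Lemma gformDr (a b w : 'cV[R]_4) : gform G w (a + b) = gform G w a + gform G w b.
Proof. by rewrite /gform !mulmxDr mxE. Qed.
Lemma gformZl k (a w : 'cV[R]_4) : gform G (k *: a) w = k * gform G a w.
Proof. by rewrite /gform linearZ /= -!scalemxAl mxE. Qed.
Lemma gformZr k (a w : 'cV[R]_4) : gform G w (k *: a) = k * gform G w a.
Proof. by rewrite /gform -!scalemxAr mxE. Qed.
Lemma gformNl (a w : 'cV[R]_4) : gform G (- a) w = - gform G a w.
Proof. by rewrite -scaleN1r gformZl mulN1r. Qed.
Lemma gformC (a w : 'cV[R]_4) : G^T = G -> gform G a w = gform G w a.
Proof.
move=> HG; rewrite /gform; transitivity ((a^T *m G *m w)^T 0 0); first by rewrite [RHS]mxE.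
by rewrite !trmx_mul trmxK HG mulmxA.
Qed.
End Aux.

Lemma Smat4 (R : ringType) (v : 'cV[R]_4) : Smat R *m (Smat R *m (Smat R *m (Smat R *m v))) = - v.
Proof.
apply/matrixP => i j; rewrite !mxE.
rewrite !big_ord_recl !big_ord0 !mxE /=.
rewrite !big_ord_recl !big_ord0 !mxE /=.
rewrite !big_ord_recl !big_ord0 !mxE /=.
rewrite !big_ord_recl !big_ord0 !mxE /=.
have -> : j = 0 by apply/val_inj; case: j => [[]].
case: i => [[|[|[|[|i]]]] Hi] //=;
rewrite ?mul0r ?mul1r ?mulN1r ?add0r ?addr0 ?mulr0 ?mul0r ?opprK ?add0r ?addr0;
 congr (- v _ _) ; apply/val_inj => //.
Qed.

Theorem theorem5p6 (R : realType) (G : 'M[R]_4) (u : 'cV[R]_4) (phi : R)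
  (HGsym : G^T = G)
  (HGpos : forall v : 'cV[R]_4, v != 0 -> 0 < gform G v v)
  (HSiso : forall v w : 'cV[R]_4,
      gform G (Smat R *m v) (Smat R *m w) = gform G v w)
  (Hunit : gform G u u = 1)
  (Hbasis : is_basis4 u (Smat R *m u) (Smat R ^+ 2 *m u) (Smat R ^+ 3 *m u))
  (Hphi : pi / 4 < phi < 3 * pi / 4)
  (Hcos : cos phi = gform G u (Smat R *m u)) :
  let c := cos phi in
  let e1 := (Num.sqrt (2 * (1 + c)))^-1 *: (u + Smat R *m u) in
  let e2 := (Num.sqrt (2 * (1 - c)))^-1 *: (- u + Smat R *m u) in
  forall a x y : R,
    gtilde G (x *: e1 + y *: e2) (x *: e1 + y *: e2) = a <->
    (2 * c + 1) / (1 + c) * x ^+ 2 + (2 * c - 1) / (1 - c) * y ^+ 2 = a.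
Proof.
move=> c e1 e2 a x y.
set S := Smat R.
have Hd : gform G u (S *m (S *m u)) = 0.
  have : gform G u (S *m (S *m u)) = - gform G u (S *m (S *m u)).
    rewrite -[in LHS]HSiso -[in LHS]HSiso -[in LHS]HSiso Smat4.
    rewrite (@gformC _ _ _ _ HGsym) gformNl. by rewrite HSiso.
  lra.
have H11 : gform G (S *m u) (S *m u) = 1 by rewrite HSiso.
have H12 : gform G (S *m u) (S *m (S *m u)) = c by rewrite HSiso.
have H21 : gform G (S *m u) u = c by rewrite (@gformC _ _ _ _ HGsym).
have H31 : gform G (S *m (S *m u)) u = 0 by rewrite (@gformC _ _ _ _ HGsym).
have H32 : gform G (S *m (S *m u)) (S *m u) = c by rewrite (@gformC _ _ _ _ HGsym).
have Hc1 : -1 <= c by apply: cos_geN1.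
have Hc2 : c <= 1 by apply: cos_le1.
set s1 := (Num.sqrt (2 * (1 + c)))^-1.
set s2 := (Num.sqrt (2 * (1 - c)))^-1.
have Hs1 : s1 ^+ 2 = (2 * (1 + c))^-1.
  by rewrite /s1 exprVn sqr_sqrtr //; lra.
have Hs2 : s2 ^+ 2 = (2 * (1 - c))^-1.
  by rewrite /s2 exprVn sqr_sqrtr //; lra.
have -> : x *: e1 + y *: e2 = (x * s1 - y * s2) *: u + (x * s1 + y * s2) *: (S *m u).
  rewrite /e1 /e2 -/s1 -/s2 !scalerDr !scalerN !scalerA scalerBl scalerDl.
  by rewrite addrACA.
rewrite /gtilde !mulmxDr -!scalemxAr.
rewrite !(gformDl, gformDr, gformZl, gformZr) -/S.
rewrite ?Hunit -?Hcos -/c Hd H11 H12 H21 H31 H32.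
have -> : (2 * c + 1) / (1 + c) * x ^+ 2 + (2 * c - 1) / (1 - c) * y ^+ 2 =
  (4 * c + 2) * s1 ^+ 2 * x ^+ 2 + (4 * c - 2) * s2 ^+ 2 * y ^+ 2.
  rewrite Hs1 Hs2 !invfM.
  set t1 := (1 + c)^-1; set t2 := (1 - c)^-1.
  by field.
split => <-; ring.
Qed.
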